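(* Let $N\ge 2m\ge 0$ be integers. Then, as a polynomial in $j$, $\Delta(N,m)$ can be written as \[\Delta(N,m)=u\,(s_0+s_1v+\cdots+s_kv^k),\qquad s_0,\dots,s_k\in\mathbb{Q},\] with $k\le\big[\frac{2N-3m-1}{2}\big]$, where $u=2j-1$, $v=j(j-1)$. Moreover, if $(N,m)\ne(2,1)$, then $s_0=0$.
   Context: For positive integers $j$ let $\sigma_0(j)=1$, $\sigma_i(j)=\sum_{1\le n_1<\cdots<n_i\le j-1}n_1\cdots n_i$ for $1\le i\le j-1$ and $\sigma_i(j)=0$ for $i\ge j$; let $Q_0(j)=1$ and $Q_k(j)=-\sum_{i=1}^k\sigma_i(j)Q_{k-i}(j)$ for $k\ge1$. For each fixed index these agree on positive integers with polynomials in $j$, and are identified with them. $\binom{\alpha}{m}=\alpha(\alpha-1)\cdots(\alpha-m+1)/m!$ is the generalized binomial coefficient. For $N\ge 2m$ define \[\Delta(N,m)=\binom{j}{m}Q_{N-2m}(j)-(-1)^N\binom{1-j}{m}\sigma_{N-2m}(j),\] a polynomial in $j$ with rational coefficients. $[x]$ denotes the integer part. *)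

(* Defs.v *)
From HB Require Import structures.
From mathcomp Require Import all_boot all_order all_algebra.
Set Implicit Arguments. Unset Strict Implicit. Unset Printing Implicit Defensive.
Import Order.TTheory GRing.Theory Num.Theory.
Local Open Scope ring_scope.

(* sigma_i(j) = sum over 1 <= n_1 < ... < n_i <= j-1 of n_1 ... n_i,
   i.e. the sum, over the i-element subsets A of {1,...,j-1} (viewed inside
   'I_j = {0,...,j-1}, avoiding 0), of prod_{n in A} n.
   This gives sigma_0(j) = 1 and sigma_i(j) = 0 for i >= j, as in the paper. *)
Definition sigma (i j : nat) : rat :=
  \sum_(A : {set 'I_j} | (#|A| == i) && [forall n in A, (0 < (n : nat))%N])
     \prod_(n in A) (n : nat)%:R.

Fixpoint Qs (k j : nat) : seq rat :=
  match k with
  | 0 => [:: 1]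
  | k'.+1 => rcons (Qs k' j)
      (- \sum_(1 <= i < k'.+2) sigma i j * nth 0 (Qs k' j) (k'.+1 - i))
  end.

Definition Q (k j : nat) : rat := nth 0 (Qs k j) k.

Definition gbinom (a : rat) (m : nat) : rat :=
  (\prod_(i < m) (a - i%:R)) / (m`!)%:R.

Definition Delta (N m j : nat) : rat :=
  gbinom j%:R m * Q (N - 2 * m) j
  - (-1) ^+ N * gbinom (1 - j%:R) m * sigma (N - 2 * m) j.

(* Main.v *)
Require Import Defs.
From HB Require Import structures.
From mathcomp Require Import all_boot all_order all_algebra.
From mathcomp Require Import zify ring.
From Stdlib Require Import ClassicalEpsilon.
Import Order.TTheory GRing.Theory Num.Theory.
Local Open Scope ring_scope.

Definition gen (j : nat) : {poly rat} :=
  \prod_(i < j) ((i%:R)%:P * 'X + 1).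

Lemma sigma_coef k j : sigma k j = (gen j)`_k.
Proof.
rewrite /gen.
have -> : \prod_(i < j) (((i : nat)%:R)%:P * 'X + 1) =
  \sum_(J in {set 'I_j}) \prod_(i < j)
     (if i \in J then ((i : nat)%:R)%:P * 'X else (1 : {poly rat})).
  exact: bigA_distr.
have H : forall J : {set 'I_j},
  \prod_i (if i \in J then ((i : nat)%:R)%:P * 'X else (1 : {poly rat}))
  = (\prod_(i in J) ((i : nat)%:R : rat))%:P * 'X ^+ #|J|.
  move=> J; rewrite -big_mkcond /= big_split /= prodr_const rmorph_prod //.
rewrite (eq_bigr _ (fun J _ => H J)).
rewrite coef_sum /sigma.
rewrite [RHS](eq_bigr (fun J : {set 'I_j} => (\prod_(i in J) ((i : nat)%:R : rat)) * ((#|J| == k)%:R))); last first.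
  by move=> J _; rewrite coefCM coefXn eq_sym.
rewrite [RHS](big_mkcond (fun J : {set 'I_j} => J \in _)) /=.
rewrite [LHS]big_mkcond /=; apply: eq_bigr => J _.
case: (#|J| == k); last by rewrite mulr0.
rewrite mulr1 andTb; case: ifP => // /forallP HF.
have [n /andP [nJ n0]] : exists n, (n \in J) && ((n : nat) == 0%N).
  apply/existsP; apply/negP => /existsP HH; apply: HF => n; apply/implyP => nJ.
  rewrite lt0n; apply/negP => n0; apply: HH; exists n; by rewrite nJ n0.
by rewrite (bigD1 n) //= (eqP n0) mul0r.
Qed.

Lemma gen_coefS j k : (gen j.+1)`_k =
  (gen j)`_k + j%:R * (if k is k'.+1 then (gen j)`_k' else 0).
Proof.
rewrite /gen big_ord_recr /= mulrDr mulr1 coefD addrC; congr (_ + _).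
rewrite mulrA coefMX; case: k => [|k] //=; first by rewrite mulr0.
by rewrite coefMC mulrC.
Qed.

Lemma sigmaS k j : sigma k.+1 j.+1 = sigma k.+1 j + j%:R * sigma k j.
Proof. by rewrite !sigma_coef gen_coefS. Qed.

Lemma sigma0 j : sigma 0 j = 1.
Proof.
rewrite sigma_coef; elim: j => [|j IH]; first by rewrite /gen big_ord0 coefC.
by rewrite gen_coefS IH mulr0 addr0.
Qed.

Lemma sigmaS0 k : sigma k.+1 0 = 0.
Proof. by rewrite sigma_coef /gen big_ord0 coefC. Qed.
Lemma size_CMle (c : rat) (p : {poly rat}) : (size (c%:P * p)%R <= size p)%N.
Proof. by rewrite mul_polyC size_scale_leq. Qed.

Lemma size_MXle (p : {poly rat}) : (size (p * 'X)%R <= (size p).+1)%N.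
Proof.
have [->|nz] := eqVneq p 0; first by rewrite mul0r size_poly0.
by rewrite size_mulX.
Qed.

Lemma size_Dle (p q : {poly rat}) n :
  (size p <= n)%N -> (size q <= n)%N -> (size (p + q)%R <= n)%N.
Proof.
move=> hp hq; apply: leq_trans (size_polyD _ _) _; rewrite geq_max hp hq //.
Qed.

Lemma binom_lead n : exists e : {poly rat}, (size e <= n)%N /\
  ('X + 1) ^+ n.+1 = 'X ^+ n.+1 + (n.+1%:R)%:P * 'X ^+ n + e.
Proof.
elim: n => [|n [e [se He]]].
  by exists 0; rewrite size_poly0; split => //; rewrite expr1 expr0 mulr1 addr0.
exists ((n.+1%:R)%:P * 'X ^+ n + e * 'X + e); split.
  apply: size_Dle; last by apply: leq_trans se _.
  apply: size_Dle; last by apply: leq_trans (size_MXle _) _.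
  by apply: leq_trans (size_CMle _ _) _; rewrite size_polyXn.
rewrite exprSr He.
have -> : (n.+2%:R)%:P = (n.+1%:R)%:P + 1 :> {poly rat}.
  by rewrite -[n.+2]addn1 natrD rmorphD.
rewrite !exprS; ring.
Qed.

Lemma antidiff n (q : {poly rat}) : (size q <= n)%N ->
  exists r : {poly rat}, (size r <= n.+1)%N /\ forall x, r.[x + 1] - r.[x] = q.[x].
Proof.
elim: n q => [|n IH] q sq.
  exists 0; rewrite size_poly0; split => // x.
  by move: sq; rewrite leqn0 size_poly_eq0 => /eqP ->; rewrite !horner0 subr0.
set c := q`_n.
have [e [se He]] := binom_lead n.
set q' := q - (c%:P * 'X ^+ n + (c / n.+1%:R)%:P * e).
have sq' : (size q' <= n)%N.
  apply/leq_sizeP => i lei.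
  rewrite /q' coefB coefD coefCM coefXn coefCM.
  have -> : e`_i = 0 by apply/leq_sizeP: lei; exact: se.
  rewrite mulr0 addr0; move: lei; rewrite leq_eqVlt => /orP [/eqP <-|lt].
    by rewrite eqxx mulr1 subrr.
  have -> : q`_i = 0 by apply/leq_sizeP: lt; exact: sq.
  by rewrite (_ : (i == n) = false) ?mulr0 ?subrr //; apply/negbTE; rewrite neq_ltn lt orbT.
have [r1 [sr1 Hr1]] := IH q' sq'.
exists ((c / n.+1%:R)%:P * 'X ^+ n.+1 + r1); split.
  apply: size_Dle; last by apply: leq_trans sr1 _.
  by apply: leq_trans (size_CMle _ _) _; rewrite size_polyXn.
move=> x.
have Hx := congr1 (fun p => p.[x]) He; move: Hx; rewrite /= !hornerE => Hx.
rewrite Hx.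
have H1 := Hr1 x; rewrite /q' !hornerE in H1.
have -> : q.[x] = r1.[x + 1] - r1.[x] + (c * x ^+ n + c / n.+1%:R * e.[x]).
  by rewrite H1; ring.
have nz : (n.+1%:R : rat) != 0 by rewrite pnatr_eq0.
field.
by rewrite -natr1 addrC in nz.
Qed.

Lemma size_XMle (p : {poly rat}) : (size ('X * p)%R <= (size p).+1)%N.
Proof. by rewrite mulrC size_MXle. Qed.

Definition adiff (p : {poly rat}) : {poly rat} :=
  proj1_sig (constructive_indefinite_description _
    (antidiff _ _ (size_XMle p))).

Lemma adiff_spec p : (size (adiff p) <= (size p).+2)%N /\
  forall x, (adiff p).[x + 1] - (adiff p).[x] = x * p.[x].
Proof.
rewrite /adiff; case: constructive_indefinite_description => r [H1 H2] /=.
by split => // x; rewrite H2 hornerM hornerX.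
Qed.

Fixpoint Sp (n : nat) : {poly rat} :=
  match n with
  | 0 => 1
  | n'.+1 => adiff (Sp n') - ((adiff (Sp n')).[0])%:P
  end.

Lemma Sp_diff n x : (Sp n.+1).[x + 1] - (Sp n.+1).[x] = x * (Sp n).[x].
Proof.
rewrite /= !hornerE; have [_ H] := adiff_spec (Sp n); rewrite -H; ring.
Qed.

Lemma Sp_0 n : (Sp n.+1).[0] = 0.
Proof. by rewrite /= !hornerE subrr. Qed.

Lemma Sp_size n : (size (Sp n) <= (2 * n).+1)%N.
Proof.
elim: n => [|n IH] /=; first by rewrite size_poly1.
have [H _] := adiff_spec (Sp n).
apply: size_Dle; first by apply: leq_trans H _; lia.
by rewrite size_polyN size_polyC; case: (_ != 0).
Qed.

Lemma Sp_sigma n j : (Sp n).[j%:R] = sigma n j.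
Proof.
elim: n j => [|n IHn] j; first by rewrite sigma0 hornerC.
elim: j => [|j IHj]; first by rewrite Sp_0 sigmaS0.
rewrite sigmaS -IHj -IHn -Sp_diff -natr1; ring.
Qed.
Lemma conv_step (a a' b b' : nat -> rat) t k :
  a' 0%N = a 0%N -> (forall i, a' i.+1 = a i.+1 + t * a i) ->
  b 0%N = b' 0%N -> (forall i, b i.+1 = b' i.+1 + t * b' i) ->
  \sum_(i < k.+1) a' i * b' (k - i)%N = \sum_(i < k.+1) a i * b (k - i)%N.
Proof.
move=> Ha0 Ha Hb0 Hb.
have E1 : \sum_(i < k.+1) a i * b' (k - i)%N =
   a 0%N * b' k + \sum_(i < k) a i.+1 * b' (k - i.+1)%N.
  by rewrite big_ord_recl subn0.
have E2 : \sum_(i < k.+1) a i * b' (k - i)%N =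
   \sum_(i < k) a i * b' (k - i)%N + a k * b' 0%N.
  by rewrite big_ord_recr /= subnn.
rewrite big_ord_recl /= subn0 Ha0.
rewrite (eq_bigr (fun i : 'I_k => a i.+1 * b' (k - i.+1)%N + t * (a i * b' (k - i.+1)%N))); last first.
  by move=> i _; rewrite /= Ha; ring.
rewrite big_split /= addrA -E1 E2.
rewrite big_ord_recr /= subnn Hb0.
rewrite [in RHS](eq_bigr (fun i : 'I_k => a i * b' (k - i)%N + t * (a i * b' (k - i.+1)%N))); last first.
  move=> i _; have hi := ltn_ord i.
  have -> : (k - i = (k - i.+1).+1)%N by lia.
  by rewrite Hb; ring.
rewrite [in RHS]big_split /=.
ring.
Qed.

Definition bq k j : rat := (-1) ^+ k * (Sp k).[1 - j%:R].

Lemma bq0 j : bq 0 j = 1.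
Proof. by rewrite /bq /= hornerC mulr1. Qed.

Lemma sigma_1 k : sigma k 1 = (k == 0)%:R.
Proof. by case: k => [|k]; rewrite ?sigma0 // sigmaS sigmaS0 mul0r addr0. Qed.

Lemma bq_j0 k : bq k 0 = (k == 0)%:R.
Proof.
rewrite /bq subr0 -[1 : rat]/(1%:R) Sp_sigma sigma_1.
by case: k => [|k] /=; rewrite ?mulr1 ?mulr0.
Qed.

Lemma bq_rec i j : bq i.+1 j = bq i.+1 j.+1 + j%:R * bq i j.+1.
Proof.
rewrite /bq.
have H := Sp_diff i (- j%:R).
have -> : 1 - j.+1%:R = - j%:R :> rat by rewrite -natr1; ring.
have -> : 1 - j%:R = - j%:R + 1 :> rat by ring.
have -> : (Sp i.+1).[- j%:R + 1] = (Sp i.+1).[- j%:R] + (- j%:R) * (Sp i).[- j%:R].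
  by rewrite -H; ring.
rewrite exprS; ring.
Qed.

Lemma conv k j : \sum_(i < k.+1) sigma i j * bq (k - i)%N j = (k == 0)%:R.
Proof.
elim: j => [|j IH].
  rewrite big_ord_recl /= sigma0 mul1r subn0 bq_j0 big1 ?addr0 //.
  by move=> i _; rewrite /bump /= sigmaS0 mul0r.
rewrite -IH; apply: (conv_step (fun i => sigma i j) (fun i => sigma i j.+1) (fun i => bq i j) (fun i => bq i j.+1) (j%:R)).
- by rewrite !sigma0.
- by move=> i; rewrite sigmaS.
- by rewrite !bq0.
- by move=> i; rewrite bq_rec.
Qed.

Lemma size_Qs k j : size (Qs k j) = k.+1.
Proof. by elim: k => [|k IH] //=; rewrite size_rcons IH. Qed.

Lemma Qs_nth k j i : (i <= k)%N -> nth 0 (Qs k j) i = Q i j.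
Proof.
elim: k i => [|k IH] i hi.
  by move: hi; rewrite leqn0 => /eqP ->.
rewrite leq_eqVlt in hi; case/orP: hi => [/eqP -> //|hi].
by rewrite /= nth_rcons size_Qs hi IH.
Qed.

Lemma QS k j : Q k.+1 j =
  - \sum_(1 <= i < k.+2) sigma i j * Q (k.+1 - i)%N j.
Proof.
rewrite /Q /= nth_rcons size_Qs ltnn eqxx; congr (- _).
rewrite !big_nat; apply: eq_bigr => i /andP [h1 h2].
by rewrite Qs_nth //; lia.
Qed.

Lemma Q_eq k j : Q k j = bq k j.
Proof.
elim: k {-2}k (leqnn k) => [|K IH] k hk.
  by move: hk; rewrite leqn0 => /eqP ->; rewrite bq0.
rewrite leq_eqVlt in hk; case/orP: hk => [/eqP ->|hk]; last by apply: IH.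
rewrite QS.
have C := conv K.+1 j.
have E : \sum_(1 <= i < K.+2) sigma i j * Q (K.+1 - i) j =
    \sum_(1 <= i < K.+2) sigma i j * bq (K.+1 - i) j.
  by apply: eq_big_nat => i /andP [h1 h2]; rewrite IH //; lia.
rewrite E.
move: C; rewrite -(big_mkord xpredT (fun i => sigma i j * bq (K.+1 - i) j)).
rewrite big_ltn // sigma0 subn0 mul1r => C.
by apply/eqP; rewrite -subr_eq0 -opprD addrC C oppr0.
Qed.

Notation T p := (p \Po (1 - 'X))%R.

Lemma T_lin (q : {poly rat}) : (1 - 'X) \Po q = 1 - q.
Proof. by rewrite comp_polyB comp_polyX -polyC1 comp_polyC. Qed.

Lemma T_T (p : {poly rat}) : T (T p) = p.
Proof. by rewrite -comp_polyA T_lin subKr comp_polyXr. Qed.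

Lemma size_T (p : {poly rat}) : size (T p) = size p.
Proof.
apply: size_comp_poly2.
by rewrite -opprB -polyC1 size_polyN size_XsubC.
Qed.

Lemma sym_dec n (p : {poly rat}) : (size p <= n)%N -> T p = p ->
  exists s : seq rat, (size s <= (size p).+1./2)%N /\
    forall x, p.[x] = \sum_(i < size s) s`_i * (x * (x - 1)) ^+ i.
Proof.
elim: n p => [|n IH] p sp Tp.
  move: sp; rewrite leqn0 size_poly_eq0 => /eqP ->.
  by exists [::]; split => // x; rewrite horner0 big_ord0.
have [->|pnz] := eqVneq p 0.
  by exists [::]; split => // x; rewrite horner0 big_ord0.
set c := p.[0].
set p1 := p - c%:P.
have sp1 : (size p1 <= size p)%N.
  apply: size_Dle => //; rewrite size_polyN size_polyC.
  by case: (c != 0) => //; rewrite lt0n size_poly_eq0.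
have [p10|p1nz] := eqVneq p1 0.
  exists [:: c]; split.
    by move: pnz; rewrite -size_poly_eq0; case: (size p) => [|[|k]].
  move=> x; rewrite big_ord1 /= expr0 mulr1.
  by move/eqP: p10; rewrite subr_eq0 => /eqP ->; rewrite hornerC.
have r0 : root p1 0.
  by rewrite /root /p1 !hornerE /c subrr.
have [q1 Hq1] := factor_theorem _ _ r0.
have r1 : root q1 1.
  have : p1.[1] = 0.
    by rewrite /p1 !hornerE -{1}Tp horner_comp !hornerE subrr.
  by rewrite Hq1 !hornerE => H; rewrite /root H.
have [q2 Hq2] := factor_theorem _ _ r1.
set w : {poly rat} := ('X - 1%:P) * ('X - 0%:P).
have Hp1 : p1 = q2 * w by rewrite Hq1 Hq2 /w mulrA.
have Tw : T w = w.
  rewrite /w comp_polyM !comp_polyB comp_polyX !comp_polyC; ring.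
have wnz : w != 0.
  by rewrite /w mulf_neq0 // -size_poly_eq0 size_XsubC.
have Tp1 : T p1 = p1 by rewrite /p1 comp_polyB comp_polyC Tp.
have Tq2 : T q2 = q2.
  by apply: (mulIf wnz); rewrite -Hp1 -{1}Tw -comp_polyM -Hp1 Tp1.
have q2nz : q2 != 0 by move: p1nz; rewrite Hp1; apply: contra => /eqP ->; rewrite mul0r.
have sw : size w = 3%N.
  by rewrite /w size_Mmonic ?monicXsubC ?size_XsubC // -size_poly_eq0 size_XsubC.
have sq2 : size p1 = (size q2).+2.
  rewrite Hp1 size_Mmonic // ?sw; first by rewrite addnS /= addn2.
  by rewrite /w monicMl ?monicXsubC.
have sq2n : (size q2 <= n)%N.
  by move: sp sp1; rewrite sq2; lia.
have [s2 [ss2 Hs2]] := IH q2 sq2n Tq2.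
exists (c :: s2); split.
  rewrite -!divn2 in ss2 *; rewrite /=; move: sp1 ss2; rewrite sq2.
  move: (size s2) (size q2) (size p) => a b d; lia.
move=> x; rewrite big_ord_recl /= expr0 mulr1.
have -> : p.[x] = c + p1.[x] by rewrite /p1 hornerD hornerN hornerC addrC subrK.
rewrite Hp1 hornerM Hs2 /w !hornerM !hornerD !hornerN !hornerX !hornerC big_distrl /=.
congr (_ + _); apply: eq_bigr => i _; rewrite exprS; ring.
Qed.

Lemma asym_dec (p : {poly rat}) : T p = - p ->
  exists s : seq rat, (size s <= (size p)./2)%N /\
    forall x, p.[x] = (2 * x - 1) * \sum_(i < size s) s`_i * (x * (x - 1)) ^+ i.
Proof.
move=> Tp.
have [->|pnz] := eqVneq p 0.
  by exists [::]; split => // x; rewrite horner0 big_ord0 mulr0.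
set h : rat := 2^-1.
have hh : 1 - h = h by rewrite /h; field.
have r : root p h.
  have : p.[h] = - p.[h] by rewrite -{1}hh -[in RHS]hornerN -Tp horner_comp !hornerE.
  move=> E; rewrite /root; apply/eqP.
  have : 2 * p.[h] = 0 by rewrite mulr2n ?mulrDl ?mul1r; rewrite [in X in X + _]E; ring.
  by move/eqP; rewrite mulf_eq0 pnatr_eq0 /= => /eqP.
have [q Hq] := factor_theorem _ _ r.
have Tl : T ('X - h%:P) = - ('X - h%:P).
  have e : h + h = 1 by rewrite /h; field.
  have e1 : (1 : {poly rat}) = h%:P + h%:P by rewrite -rmorphD e.
  rewrite comp_polyB comp_polyX comp_polyC e1; ring.
have lnz : 'X - h%:P != 0 by rewrite -size_poly_eq0 size_XsubC.
have Tq : T q = q.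
  apply: (mulIf lnz); apply: oppr_inj; rewrite -mulrN -Tl -comp_polyM -Hq Tp.
  by rewrite Hq.
have qnz : q != 0 by move: pnz; rewrite Hq; apply: contra => /eqP ->; rewrite mul0r.
have sp : size p = (size q).+1.
  by rewrite Hq size_Mmonic ?monicXsubC // size_XsubC addn2.
have [s [ss Hs]] := sym_dec _ _ (leqnn (size q)) Tq.
exists [seq y / 2 | y <- s]; split.
  by rewrite size_map sp.
move=> x; rewrite Hq hornerM Hs size_map hornerD hornerN hornerX hornerC.
rewrite mulrC !big_distrr /=; apply: eq_bigr => i _.
by rewrite (nth_map 0) //; rewrite /h; field.
Qed.

Lemma size_mul_le a b (p q : {poly rat}) :
  (size p <= a.+1)%N -> (size q <= b.+1)%N -> (size (p * q)%R <= (a + b).+1)%N.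
Proof.
move=> hp hq; apply: leq_trans (size_polyMleq p q) _.
rewrite -subn1; lia.
Qed.

Lemma size_prodX m : (size (\prod_(i < m) ('X - ((i : nat)%:R)%:P) : {poly rat})%R <= m.+1)%N.
Proof.
elim: m => [|m IH]; first by rewrite big_ord0 size_poly1.
rewrite big_ord_recr /=.
have := size_mul_le m 1 _ _ IH (_ : (size ('X - (m%:R)%:P : {poly rat})%R <= 2)%N).
by rewrite addn1; apply; rewrite size_XsubC.
Qed.

Lemma Delta1 N m : (2 * m <= N)%N -> (N, m) != (2%N, 1%N) -> Delta N m 1 = 0.
Proof.
move=> hNm hne; rewrite /Delta.
case En: (N - 2 * m)%N => [|n'].
  have -> : Q 0 1 = 1 by [].
  rewrite sigma0 !mulr1.
  have -> : N = (2 * m)%N by lia.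
  rewrite exprM sqrrN expr1n mul1r /gbinom.
  case: m hNm hne En => [|[|m']] hNm hne En.
  - by rewrite !big_ord0 subrr.
  - by move: hne; have -> : N = 2%N by lia...
  - rewrite big_ord_recl big_ord_recl /= [in X in _ * (X * _)]subrr.
    by rewrite big_ord_recl /= !(subrr, subr0, mul0r, mulr0).
by rewrite Q_eq /bq sigma_1 subrr Sp_0 mulr0n !mulr0 subrr.
Qed.

Theorem proposition2p5 (N m : nat) :
  (2 * m <= N)%N ->
  exists s : seq rat,
    (size s <= (2 * N + 1 - 3 * m)./2)%N /\
    (forall j : nat, (0 < j)%N ->
       Delta N m j =
       (2 * j%:R - 1) * \sum_(i < size s) s`_i * (j%:R * (j%:R - 1)) ^+ i) /\
    ((N, m) != (2, 1)%N -> s`_0 = 0).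
Proof.
move=> hNm.
have [n En] : exists n, N = (n + 2 * m)%N by exists (N - 2 * m)%N; lia.
subst N.
have hl (x : rat) : (1 - 'X : {poly rat}).[x] = 1 - x by rewrite !hornerE.
pose G : {poly rat} := (m`!%:R)^-1 *: \prod_(i < m) ('X - ((i : nat)%:R)%:P).
have HG a : gbinom a m = G.[a].
  rewrite /gbinom /G hornerZ horner_prod mulrC; congr (_ * _).
  by apply: eq_bigr => i _; rewrite hornerXsubC.
have sG : (size G <= m.+1)%N by apply: leq_trans (size_scale_leq _ _) (size_prodX m).
clearbody G.
pose P := (-1) ^+ n *: (G * T (Sp n) - T G * Sp n).
have HD j : Delta (n + 2 * m) m j = P.[j%:R].
  rewrite /Delta addnK Q_eq /bq -Sp_sigma !HG /P hornerZ hornerD hornerN !hornerM.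
  rewrite !horner_comp hl.
  rewrite exprD exprM sqrrN expr1n; ring.
have TP : T P = - P.
  rewrite /P comp_polyZ comp_polyB !comp_polyM !T_T -!mul_polyC; ring.
have sS : (size (Sp n) <= (2 * n).+1)%N by apply: Sp_size.
have sP : (size P <= (m + 2 * n).+1)%N.
  apply: leq_trans (size_scale_leq _ _) _.
  apply: size_Dle; last rewrite size_polyN.
    by apply: size_mul_le; rewrite ?size_T.
  by apply: size_mul_le; rewrite ?size_T.
have [s [ss Hs]] := asym_dec _ TP.
exists s; split.
  apply: leq_trans ss _; apply: half_leq; apply: leq_trans sP _; lia.
split.
  by move=> j _; rewrite HD Hs.
move=> hne.
have := HD 1%N; rewrite Delta1 // Hs.
case: s {ss Hs} => [|a s] //= H.
rewrite {1}H big_ord_recl /= expr0 mulr1 big1 ?addr0.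
  by rewrite mulr1; ring.
by move=> i _; rewrite subrr mulr0 expr0n /= mulr0n mulr0.
Qed.
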